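(* Let $n\ge1$ and $d\ge1$ be integers, $p\in(0,1)$, $\delta\in(0,1)$, and let $I\subseteq[n]$ be a fixed set with $|I|\le d$. Let $m$ be a positive integer with $$m\ \ge\ \max_{0\le w\le d-1}\frac{(d-w)\ln n+\ln(1/\delta)+\ln(d^22^d)}{\min\left(\ln\frac{1}{1-2p^d+2p^{2d-w}},\ \ln\frac{1}{1+p^d-p^w}\right)}$$ (maximum over integers $w$). Let $M$ be a random $m\times n$ matrix whose entries are independent, each equal to $0$ with probability $p$ and to $1$ with probability $1-p$. Then with probability at least $1-\delta$ the matrix $M$ is $(I,d)$-separable.
   Context: For $J\subseteq[n]$ and $a\in\{0,1\}^n$, $T(J,a)=1$ if $a_j=1$ for some $j\in J$ and $T(J,a)=0$ otherwise. For an $m\times n$ 0/1 matrix $M$ with rows $M_1,\dots,M_m$, $T(J,M)=(T(J,M_i))_{i=1}^m$. The matrix $M$ is $(I,d)$-separable if for every $J\subseteq[n]$ with $|J|\le d$ and $J\ne I$ we have $T(J,M)\ne T(I,M)$. *)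

(* Defs.v *)
From HB Require Import structures.
From mathcomp Require Import all_boot all_order all_algebra.
From mathcomp Require Import boolp reals exp.
Set Implicit Arguments. Unset Strict Implicit. Unset Printing Implicit Defensive.
Import Order.TTheory GRing.Theory Num.Theory.
Local Open Scope ring_scope.

(* T(J,a) for a row a of a 0/1 matrix (entries: true = 1, false = 0). *)
Definition Trow (m n : nat) (J : {set 'I_n}) (M : 'M[bool]_(m, n)) (i : 'I_m) : bool :=
  [exists j in J, M i j].

Definition TM (m n : nat) (J : {set 'I_n}) (M : 'M[bool]_(m, n)) : {ffun 'I_m -> bool} :=
  [ffun i => Trow J M i].

Definition separable (m n : nat) (I : {set 'I_n}) (d : nat) (M : 'M[bool]_(m, n)) : Prop :=
  forall J : {set 'I_n}, (#|J| <= d)%N -> J <> I -> TM J M <> TM I M.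

Definition mx_weight (R : realType) (p : R) (m n : nat) (M : 'M[bool]_(m, n)) : R :=
  \prod_(i < m) \prod_(j < n) (if M i j then 1 - p else p).

Definition mx_prob (R : realType) (p : R) (m n : nat) (E : 'M[bool]_(m, n) -> Prop) : R :=
  \sum_(M : 'M[bool]_(m, n) | `[< E M >]) mx_weight p M.

(* Main.v *)
Require Import Defs.
From HB Require Import structures.
From mathcomp Require Import all_boot all_order all_algebra.
From mathcomp Require Import boolp reals exp.
From mathcomp Require Import sequences.
From mathcomp Require Import ring lra zify.
Import Order.TTheory GRing.Theory Num.Theory.
Set Implicit Arguments. Unset Strict Implicit. Unset Printing Implicit Defensive.
Local Open Scope ring_scope.

Section Prob.
Variable R : realType.
Variable p : R.

Definition wt (b : bool) : R := if b then 1 - p else p.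
Definition rw n (r : {ffun 'I_n -> bool}) : R := \prod_j wt (r j).
Definition Tr n (S : {set 'I_n}) (r : {ffun 'I_n -> bool}) := [exists j in S, r j].

Lemma row_prod n (F : 'I_n -> bool -> R) :
  \sum_(r : {ffun 'I_n -> bool}) \prod_j F j (r j) = \prod_j (F j true + F j false).
Proof.
rewrite -bigA_distr_bigA; apply: eq_bigr => j _; by rewrite big_bool.
Qed.

Lemma mx_prod m n (G : 'I_m -> {ffun 'I_n -> bool} -> R) :
  \sum_(M : 'M[bool]_(m, n)) \prod_i G i [ffun j => M i j] =
  \prod_i \sum_(r : {ffun 'I_n -> bool}) G i r.
Proof.
rewrite bigA_distr_bigA /=.
rewrite (reindex (fun f : {ffun 'I_m -> {ffun 'I_n -> bool}} => \matrix_(i, j) f i j)) /=.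
  apply: eq_bigr => f _; apply: eq_bigr => i _; congr G.
  by apply/ffunP => j; rewrite !ffunE mxE.
exists (fun M : 'M[bool]_(m, n) => [ffun i => [ffun j => M i j]]) => x _.
  by apply/ffunP => i; apply/ffunP => j; rewrite !ffunE mxE.
by apply/matrixP => i j; rewrite mxE !ffunE.
Qed.

Lemma prod_ind (I : finType) (b : I -> bool) :
  \prod_i ((b i)%:R : R) = ([forall i, b i])%:R.
Proof.
case: (boolP [forall i, b i]) => [/forallP H | /forallPn [i Hi]].
  by rewrite big1 // => i _; rewrite H.
by rewrite (bigD1 i) //= (negbTE Hi) mul0r.
Qed.

Lemma Ez n (S : {set 'I_n}) :
  \sum_(r : {ffun 'I_n -> bool}) (~~ Tr S r)%:R * rw r = p ^+ #|S|.
Proof.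
transitivity (\sum_(r : {ffun 'I_n -> bool})
   \prod_j ((if j \in S then (~~ r j)%:R else 1) * wt (r j))).
  apply: eq_bigr => r _; rewrite /rw big_split /=; congr (_ * _).
  rewrite /Tr negb_exists_in -prod_ind; apply: eq_bigr => j _.
  by case: (j \in S).
rewrite (row_prod (fun j b => (if j \in S then (~~ b)%:R else 1) * wt b)).
transitivity (\prod_j (if j \in S then p else 1)).
  apply: eq_bigr => j _; case: (j \in S); rewrite /wt /=.
    by rewrite mul0r add0r mul1r.
  by rewrite !mul1r subrK.
by rewrite -big_mkcond /= prodr_const.
Qed.

Lemma E1 n : \sum_(r : {ffun 'I_n -> bool}) rw r = 1.
Proof.
rewrite /rw (row_prod (fun _ b => wt b)) big1 // => j _; by rewrite /wt subrK.
Qed.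

Lemma TrU n (I J : {set 'I_n}) r : Tr (I :|: J) r = Tr I r || Tr J r.
Proof.
rewrite /Tr; apply/existsP/orP.
  move=> [j /andP [] ]; rewrite in_setU => /orP [] Hj Hr.
    by left; apply/existsP; exists j; rewrite Hj.
  by right; apply/existsP; exists j; rewrite Hj.
move=> [] /existsP [j /andP [Hj Hr]]; exists j; by rewrite in_setU Hj ?orbT.
Qed.

Definition qv (i j u : nat) : R := 1 - p ^+ i - p ^+ j + 2 * p ^+ u.

Lemma Eq n (I J : {set 'I_n}) :
  \sum_(r : {ffun 'I_n -> bool}) (Tr J r == Tr I r)%:R * rw r
  = qv #|I| #|J| #|I :|: J|.
Proof.
have key r : (Tr J r == Tr I r)%:R * rw r =
   rw r - (~~ Tr I r)%:R * rw r - (~~ Tr J r)%:R * rw r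
   + 2 * ((~~ Tr (I :|: J) r)%:R * rw r).
  rewrite TrU; case: (Tr I r); case: (Tr J r) => /=; ring.
rewrite (eq_bigr _ (fun r _ => key r)).
by rewrite !big_split /= !sumrN -mulr_sumr E1 !Ez.
Qed.


Lemma mxw_row m n (M : 'M[bool]_(m, n)) :
  mx_weight p M = \prod_i rw [ffun j => M i j].
Proof. by apply: eq_bigr => i _; apply: eq_bigr => j _; rewrite ffunE. Qed.

Lemma mx_total m n : \sum_(M : 'M[bool]_(m, n)) mx_weight p M = 1.
Proof.
rewrite (eq_bigr _ (fun M _ => mxw_row M)).
rewrite (mx_prod (fun _ r => rw r)).
by rewrite big1 // => i _; rewrite E1.
Qed.

Lemma TM_eq m n (I J : {set 'I_n}) (M : 'M[bool]_(m, n)) :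
  (TM J M == TM I M) =
  [forall i, Tr J [ffun j => M i j] == Tr I [ffun j => M i j]].
Proof.
have E S i : Trow S M i = Tr S [ffun j => M i j].
  by rewrite /Trow /Tr; apply: eq_existsb => j; rewrite ffunE.
apply/eqP/forallP => [H i | H].
  have := congr1 (fun f : {ffun _ -> bool} => f i) H; rewrite /= !ffunE !E => ->; exact: eqxx.
apply/ffunP => i; rewrite !ffunE !E; exact: (eqP (H i)).
Qed.

Lemma prob_eq m n (I J : {set 'I_n}) :
  \sum_(M : 'M[bool]_(m, n)) (TM J M == TM I M)%:R * mx_weight p M
  = (qv #|I| #|J| #|I :|: J|) ^+ m.
Proof.
transitivity (\sum_(M : 'M[bool]_(m, n)) \prod_i
  ((Tr J [ffun j => M i j] == Tr I [ffun j => M i j])%:R * rw [ffun j => M i j])).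
  apply: eq_bigr => M _; rewrite TM_eq mxw_row big_split /=; congr (_ * _).
  by rewrite prod_ind.
rewrite (mx_prod (fun _ r => (Tr J r == Tr I r)%:R * rw r)).
by rewrite (eq_bigr _ (fun i _ => Eq I J)) prodr_const card_ord.
Qed.


Hypothesis p01 : 0 <= p <= 1.

Lemma w_ge0 m n (M : 'M[bool]_(m, n)) : 0 <= mx_weight p M.
Proof.
case/andP: p01 => H0 H1.
apply: prodr_ge0 => i _; apply: prodr_ge0 => j _; case: (M i j) => //.
by rewrite subr_ge0.
Qed.

Lemma union_bound m n (I : {set 'I_n}) d :
  \sum_(M : 'M[bool]_(m, n) | ~~ `[< separable I d M >]) mx_weight p M <=
  \sum_(J : {set 'I_n} | (#|J| <= d)%N && (J != I)) (qv #|I| #|J| #|I :|: J|) ^+ m.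
Proof.
rewrite (eq_bigr _ (fun J _ => esym (prob_eq m I J))) exchange_big /=.
rewrite big_mkcond /=; apply: ler_sum => M _.
case: asboolP => Hs /=.
  by apply: sumr_ge0 => J _; apply: mulr_ge0 => //; apply: w_ge0.
have /existsP [J /and3P [HJ HJI HT]] : [exists J : {set 'I_n}, [&& (#|J| <= d)%N, J != I & TM J M == TM I M]].
  apply/existsP; apply: contrapT => Hn; apply: Hs => J HJ HJI HT; apply: Hn.
  by exists J; rewrite HJ HT eqxx andbT; apply/eqP.
rewrite (bigD1 J) /=; last by rewrite HJ HJI.
rewrite HT mul1r lerDl; apply: sumr_ge0 => K _; apply: mulr_ge0 => //; apply: w_ge0.
Qed.

Lemma prob_sep m n (I : {set 'I_n}) d :
  mx_prob p (fun M : 'M[bool]_(m, n) => separable I d M) =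
  1 - \sum_(M : 'M[bool]_(m, n) | ~~ `[< separable I d M >]) mx_weight p M.
Proof.
rewrite -(mx_total m n) (bigID (fun M : 'M[bool]_(m, n) => `[< separable I d M >])) /=.
by rewrite addrK.
Qed.

End Prob.

Section Count.
Variable R : realType.

Lemma card_sum n d (h : nat -> R) :
  \sum_(K : {set 'I_n} | (#|K| <= d)%N) h #|K| = \sum_(k < d.+1) 'C(n, k)%:R * h k.
Proof.
transitivity (\sum_(k < d.+1) \sum_(K : {set 'I_n}) (if #|K| == k then h k else 0)).
  rewrite exchange_big /= big_mkcond /=; apply: eq_bigr => K _.
  case: ifP => Hd.
    have Hlt : (#|K| < d.+1)%N by [].
    rewrite (bigD1 (Ordinal Hlt)) //= eqxx big1 ?addr0 // => k Hk.
    case: eqP => // Ek; case/negP: Hk; apply/eqP/val_inj => /=; by rewrite Ek.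
  rewrite big1 // => k _; case: eqP => // Ek.
  by move: (ltn_ord k); rewrite -Ek ltnS Hd.
apply: eq_bigr => k _; rewrite -big_mkcond /=.
have -> : 'C(n, k) = #|[set K : {set 'I_n} | #|K| == k]| by rewrite card_draws card_ord.
rewrite mulr_natl -sumr_const; apply: eq_bigl => K; by rewrite inE.
Qed.


Lemma bin_le n k : ('C(n, k) <= n ^ k)%N.
Proof.
apply: (@leq_trans ('C(n, k) * k`!)); first by rewrite leq_pmulr ?fact_gt0.
rewrite bin_ffact ffact_prod.
apply: (@leq_trans (\prod_(i < k) n)); first by apply: leq_prod => i _; exact: leq_subr.
by rewrite prod_nat_const card_ord.
Qed.

Lemma count_sum n d (I : {set 'I_n}) : (1 <= n)%N -> (1 <= d)%N -> (#|I| <= d)%N ->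
  \sum_(J : {set 'I_n} | (#|J| <= d)%N) ((n%:R : R) ^+ maxn 1 #|J :\: I|)^-1
  <= (d ^ 2 * 2 ^ d)%N%:R.
Proof.
move=> Hn Hd HI.
have n0 : (0 : R) < n%:R by rewrite ltr0n.
have h0 e : (0 : R) <= ((n%:R : R) ^+ e)^-1 by rewrite invr_ge0 exprn_ge0 // ltW.
case: d Hd HI => [|[|d]] // _ HI.
  apply: (@le_trans _ _ (\sum_(J : {set 'I_n} | (#|J| <= 1)%N) (n%:R : R)^-1)).
    apply: ler_sum => J _; rewrite lef_pV2 ?posrE ?exprn_gt0 //.
    rewrite -natrX ler_nat -{1}(expn1 n); apply: leq_pexp2l => //.
    exact: leq_maxl.
  rewrite (card_sum n 1 (fun _ => (n%:R : R)^-1)).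
  rewrite !big_ord_recl big_ord0 /= bin0 bin1 mul1r mulfV ?addr0; last by rewrite gt_eqF.
  have : (n%:R : R)^-1 <= 1 by rewrite -[_^-1]mul1r ler_pdivrMr // mul1r ler1n.
  have -> : (1 ^ 2 * 2 ^ 1)%N = 2%N by [].
  by move=> H; lra.
set h := fun K : {set 'I_n} => ((n%:R : R) ^+ maxn 1 #|K|)^-1.
set A := [set J : {set 'I_n} | (#|J| <= d.+2)%N].
set phi := fun J : {set 'I_n} => (J :&: I, J :\: I).
set B := [set x : {set 'I_n} * {set 'I_n} | (x.1 \subset I) && (#|x.2| <= d.+2)%N].
have inj : {in A &, injective phi}.
  move=> J1 J2 _ _ [E1 E2]; by rewrite -(setID J1 I) -(setID J2 I) E1 E2.
have -> : \sum_(J : {set 'I_n} | (#|J| <= d.+2)%N) ((n%:R : R) ^+ maxn 1 #|J :\: I|)^-1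
   = \sum_(x in phi @: A) h x.2.
  by rewrite big_imset //=; apply: eq_bigl => J; rewrite inE.
apply: (@le_trans _ _ (\sum_(x in B) h x.2)).
  rewrite [X in X <= _]big_mkcond [X in _ <= X]big_mkcond; apply: ler_sum => x _.
  case: ifP => Hx; case: ifP => Hy //; last exact: h0.
  case/imsetP: Hx => J; rewrite inE => HJ Ex; move: Hy; rewrite Ex inE /= subsetIr /=.
  by rewrite (leq_trans (subset_leq_card (subsetDl J I)) HJ).
have -> : \sum_(x in B) h x.2 = \sum_(L : {set 'I_n} | L \subset I) \sum_(K : {set 'I_n} | (#|K| <= d.+2)%N) h K.
  by rewrite pair_big; apply: eq_bigl => x; rewrite inE.
have inner : \sum_(K : {set 'I_n} | (#|K| <= d.+2)%N) h K <= (d.+3)%:R.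
  rewrite /h (card_sum n d.+2 (fun k => ((n%:R : R) ^+ maxn 1 k)^-1)).
  apply: (@le_trans _ _ (\sum_(k < d.+3) (1 : R))); last by rewrite sumr_const card_ord.
  apply: ler_sum => k _; rewrite -natrX ler_pdivrMr ?ltr0n ?expn_gt0 ?Hn //.
  rewrite mul1r ler_nat; apply: leq_trans (bin_le n k) _.
  by apply: leq_pexp2l => //; exact: leq_maxr.
apply: (@le_trans _ _ (\sum_(L : {set 'I_n} | L \subset I) (d.+3)%:R)).
  by apply: ler_sum => L _; exact: inner.
have -> : \sum_(L : {set 'I_n} | L \subset I) ((d.+3)%:R : R) = (d.+3)%:R *+ #|powerset I|.
  by rewrite -sumr_const; apply: eq_bigl => L; rewrite powersetE.
rewrite card_powerset -mulr_natr -natrM ler_nat.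
apply: leq_mul; first by rewrite -addn1 expnS expn1; nia.
by apply: leq_pexp2l.
Qed.

End Count.

Section Q.
Variable R : realType.
Variable p : R.
Hypothesis p0 : 0 < p.
Hypothesis p1 : p < 1.

Lemma pw_le k l : (k <= l)%N -> p ^+ l <= p ^+ k.
Proof. by move=> H; apply: ler_wiXn2l => //; [exact: ltW | exact: ltW]. Qed.

Lemma pw_gt0 k : 0 < p ^+ k. Proof. exact: exprn_gt0. Qed.
Lemma pw_le1 k : p ^+ k <= 1. Proof. by apply: exprn_ile1; apply: ltW. Qed.

Lemma qbound (i j u c b d : nat) :
  (i <= d)%N -> (j <= d)%N -> j = (c + b)%N -> u = (i + b)%N -> (c <= i)%N ->
  (b = 0%N -> (c < i)%N) ->
  1 - p ^+ i - p ^+ j + 2 * p ^+ u <= 1 - 2 * p ^+ d + 2 * p ^+ (2 * d - (d - maxn 1 b))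
  \/ 1 - p ^+ i - p ^+ j + 2 * p ^+ u <= 1 + p ^+ d - p ^+ (d - maxn 1 b).
Proof.
move=> Hi Hj Ej Eu Hc Hb.
case: b Ej Eu Hb => [|b] Ej Eu Hb.
  have Hci := Hb erefl.
  have -> : (d - maxn 1 0)%N = (d - 1)%N by lia.
  right; rewrite Ej Eu !addn0.
  have e1 : p ^+ d = p ^+ (d - 1) * p by rewrite -exprSr; congr (_ ^+ _); lia.
  have f1 : p ^+ i <= p ^+ c * p by rewrite -exprSr; apply: pw_le.
  have f2 : p ^+ (d - 1) <= p ^+ c by apply: pw_le; lia.
  have h : 0 <= (p ^+ c - p ^+ (d - 1)) * (1 - p).
    by apply: mulr_ge0; rewrite subr_ge0 // ltW.
  rewrite e1; nra.
have -> : (d - maxn 1 b.+1)%N = (d - b.+1)%N by lia.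
have -> : (2 * d - (d - b.+1))%N = (d + b.+1)%N by lia.
set P := p ^+ b.+1.
have eU : p ^+ u = p ^+ i * P by rewrite Eu exprD.
have eD : p ^+ (d + b.+1) = p ^+ d * P by rewrite exprD.
have eZ : p ^+ d = p ^+ (d - b.+1) * P by rewrite -exprD; congr (_ ^+ _); lia.
have P1 : P <= 1 by exact: pw_le1.
rewrite eU eD.
case: (leqP i (d - b.+1)) => Hid.
  right.
  have f1 : p ^+ (d - b.+1) <= p ^+ i by apply: pw_le.
  have f2 : p ^+ i * P <= p ^+ j by rewrite -exprD; apply: pw_le; lia.
  have h : 0 <= (p ^+ i - p ^+ (d - b.+1)) * (1 - P).
    by apply: mulr_ge0; rewrite subr_ge0.
  rewrite eZ; nra.
have f3 : p ^+ d <= p ^+ j by apply: pw_le.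
case: (lerP (2 * P) 1) => HP.
  left.
  have f1 : p ^+ d <= p ^+ i by apply: pw_le.
  have h : 0 <= (p ^+ i - p ^+ d) * (1 - 2 * P).
    by apply: mulr_ge0; rewrite subr_ge0.
  nra.
right.
have f1 : p ^+ i <= p ^+ (d - b.+1) by apply: pw_le; lia.
have h : 0 <= (p ^+ (d - b.+1) - p ^+ i) * (2 * P - 1).
  by apply: mulr_ge0; rewrite subr_ge0 // ltW.
rewrite eZ; rewrite eZ in f3; nra.
Qed.


Lemma AB_pos d bp : (1 <= bp)%N -> (bp <= d)%N ->
  (0 < 1 - 2 * p ^+ d + 2 * p ^+ (2 * d - (d - bp)) < 1) /\
  (0 < 1 + p ^+ d - p ^+ (d - bp) < 1).
Proof.
move=> H1 H2.
have -> : (2 * d - (d - bp))%N = (d + bp)%N by lia.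
rewrite exprD.
set P := p ^+ bp; set Z := p ^+ d.
have eZ : Z = p ^+ (d - bp) * P by rewrite /Z /P -exprD; congr (_ ^+ _); lia.
have P1 : P < 1 by apply: le_lt_trans (pw_le H1) _; rewrite expr1.
have P0 : 0 < P by exact: pw_gt0.
have Z0 : 0 < Z by exact: pw_gt0.
have ZP : Z <= P by exact: pw_le.
have W0 : 0 < p ^+ (d - bp) by exact: pw_gt0.
have W1 : p ^+ (d - bp) <= 1 by exact: pw_le1.
split; apply/andP; split.
- have h1 : Z * (1 - P) <= P * (1 - P) by apply: ler_wpM2r => //; rewrite subr_ge0 ltW.
  nra.
- have h1 : 0 < Z * (1 - P) by apply: mulr_gt0; rewrite ?subr_gt0.
  nra.
- rewrite eZ; nra.
- rewrite eZ; nra.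
Qed.

Lemma pow_small (q Q D N : R) (m : nat) : 0 <= q -> q <= Q -> 0 < Q -> 0 < D ->
  D <= ln (1 / Q) -> N / D <= m%:R -> q ^+ m <= expR (- N).
Proof.
move=> q0 qQ Q0 D0 DQ ND.
apply: le_trans (_ : Q ^+ m <= _).
  by apply: lerXn2r; rewrite ?nnegrE // ?ltW // (le_trans q0 qQ).
rewrite -[Q ^+ m]lnK ?posrE ?exprn_gt0 // ler_expR lnXn // -mulr_natl.
have eQ : ln Q = - ln (1 / Q) by rewrite div1r lnV ?posrE // opprK.
rewrite eQ.
have h1 : N <= m%:R * D by rewrite -ler_pdivrMr.
have h2 : m%:R * D <= m%:R * ln (1 / Q) by apply: ler_wpM2l; rewrite ?ler0n.
lra.
Qed.

Lemma expN_eq (b n K : nat) (delta : R) : (0 < n)%N -> (0 < K)%N -> 0 < delta ->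
  expR (- (b%:R * ln (n%:R : R) + ln (1 / delta) + ln (K%:R : R)))
  = delta / (K%:R * n%:R ^+ b).
Proof.
move=> n0 K0 d0.
have n0' : (0 : R) < n%:R by rewrite ltr0n.
have K0' : (0 : R) < K%:R by rewrite ltr0n.
rewrite expRN !expRD mulr_natl -lnXn // !lnK ?posrE ?exprn_gt0 ?divr_gt0 //.
have : (0 : R) < n%:R ^+ b by rewrite exprn_gt0.
move=> H; field.
by rewrite !gt_eqF.
Qed.

End Q.

Lemma card_u n (I J : {set 'I_n}) : #|I :|: J| = (#|I| + #|J :\: I|)%N.
Proof.
have e1 := cardsU I J; have e2 := cardsID I J; rewrite setIC in e1.
have e3 : (#|J :&: I| <= #|J|)%N by apply: subset_leq_card; apply: subsetIl.
move: e1 e2 e3; move: #|I :|: J| #|I| #|J| #|J :&: I| #|J :\: I| => x1 x2 x3 x4 x5.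
lia.
Qed.

Theorem lemma3 (R : realType) (n d : nat) (p delta : R) (I : {set 'I_n}) (m : nat) :
  (1 <= n)%N -> (1 <= d)%N ->
  0 < p < 1 -> 0 < delta < 1 ->
  (#|I| <= d)%N ->
  (0 < m)%N ->
  (forall w : nat, (w <= d - 1)%N ->
     ((d - w)%N%:R * ln (n%:R) + ln (1 / delta) + ln ((d ^ 2 * 2 ^ d)%N%:R))
       / Num.min (ln (1 / (1 - 2 * p ^+ d + 2 * p ^+ (2 * d - w)%N)))
                 (ln (1 / (1 + p ^+ d - p ^+ w)))
     <= m%:R) ->
  1 - delta <= mx_prob p (fun M : 'M[bool]_(m, n) => separable I d M).
Proof.
move=> Hn Hd /andP [p0 p1] /andP [d0 d1] HI Hm H.
have p01 : 0 <= p <= 1 by rewrite !ltW.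
rewrite prob_sep.
suff S : \sum_(M : 'M[bool]_(m, n) | ~~ `[< separable I d M >]) mx_weight p M <= delta.
  lra.
apply: le_trans (union_bound p01 m I d) _.
set K := (d ^ 2 * 2 ^ d)%N.
have K0 : (0 < K)%N by rewrite /K muln_gt0 expn_gt0 /= expn_gt0 Hd.
have K0' : (0 : R) < K%:R by rewrite ltr0n.
have n0' : (0 : R) < n%:R by rewrite ltr0n.
apply: (@le_trans _ _ (\sum_(J : {set 'I_n} | (#|J| <= d)%N && (J != I))
          delta / (K%:R * n%:R ^+ maxn 1 #|J :\: I|))).
  apply: ler_sum => J /andP [HJ HJI].
  set b := #|J :\: I|.
  have Hbj : (b <= #|J|)%N by apply: subset_leq_card; apply: subsetDl.
  have Hb : (maxn 1 b <= d)%N by rewrite geq_max Hd (leq_trans Hbj HJ).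
  have Hb1 : (1 <= maxn 1 b)%N by apply: leq_maxl.
  have Hw : (d - maxn 1 b <= d - 1)%N by lia.
  have Hw' := H _ Hw.
  rewrite (_ : (d - (d - maxn 1 b))%N = maxn 1 b) in Hw'; last by lia.
  have [/andP [A0 A1] /andP [B0 B1]] := AB_pos p0 p1 Hb1 Hb.
  have q0 : 0 <= qv p #|I| #|J| #|I :|: J|.
    rewrite -Eq; apply: sumr_ge0 => r _; apply: mulr_ge0 => //.
    by apply: prodr_ge0 => j _; rewrite /wt; case: (r j); rewrite ?subr_ge0 ?ltW.
  have ej : #|J| = (#|J :&: I| + b)%N by rewrite /b cardsID.
  have eu : #|I :|: J| = (#|I| + b)%N by exact: card_u.
  have hc : (#|J :&: I| <= #|I|)%N by apply: subset_leq_card; apply: subsetIr.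
  have hb0 : b = 0%N -> (#|J :&: I| < #|I|)%N.
    move=> /eqP; rewrite cards_eq0 setD_eq0 => JI.
    have -> : J :&: I = J by apply/setIidPl.
    by apply: proper_card; rewrite properEneq HJI JI.
  have D0 : 0 < Num.min (ln (1 / (1 - 2 * p ^+ d + 2 * p ^+ (2 * d - (d - maxn 1 b))%N)))
                 (ln (1 / (1 + p ^+ d - p ^+ (d - maxn 1 b)))).
    by rewrite lt_min !ln_gt0 // !div1r invf_gt1.
  rewrite -expN_eq //.
  have [hA|hB] := qbound p0 p1 HI HJ ej eu hc hb0.
    apply: (pow_small q0 hA A0 D0 _ Hw').
    by rewrite ge_min lexx.
  apply: (pow_small q0 hB B0 D0 _ Hw').
  by rewrite ge_min lexx orbT.
have -> : \sum_(J : {set 'I_n} | (#|J| <= d)%N && (J != I))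
          delta / (K%:R * n%:R ^+ maxn 1 #|J :\: I|)
   = delta / K%:R * \sum_(J : {set 'I_n} | (#|J| <= d)%N && (J != I))
          (n%:R ^+ maxn 1 #|J :\: I|)^-1.
  by rewrite mulr_sumr; apply: eq_bigr => J _; rewrite invfM mulrA.
have h0 e : (0 : R) <= ((n%:R : R) ^+ e)^-1 by rewrite invr_ge0 exprn_ge0 // ltW.
apply: (@le_trans _ _ (delta / K%:R * \sum_(J : {set 'I_n} | (#|J| <= d)%N)
          (n%:R ^+ maxn 1 #|J :\: I|)^-1)).
  apply: ler_wpM2l; first by rewrite divr_ge0 // ltW.
  rewrite [X in _ <= X](bigID (fun J => J != I)) /= lerDl.
  by apply: sumr_ge0 => J _.
apply: (@le_trans _ _ (delta / K%:R * K%:R)).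
  apply: ler_wpM2l; first by rewrite divr_ge0 // ltW.
  exact: count_sum.
by rewrite divfK // gt_eqF.
Qed.
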